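(* Let $G$ be a finite group. If $\mathcal{C}$ is a cycle of $\mathcal{P}(G)$ with maximum length, then $\ell(\mathcal{C})\geq w_G+1$. Moreover, if equality holds, then for every path $\mathcal{W}=c_1,\dots,c_k$ in $\mathcal{P}^*(G)/\mathtt{N}$ of maximum $\mathtt{N}$-weight, and for every $i\in\{2,\dots,k-1\}$ with $|c_i|\geq2$, there is no vertex $y$ of $\mathcal{P}^*(G)/\mathtt{N}$ with $y\notin\{c_1,\dots,c_k\}$, $y$ equal or adjacent to $c_i$, and $|y|\geq2$.
   Context: The power graph $\mathcal{P}(G)$ has vertex set $G$, and distinct $x,y$ are adjacent iff one is a positive integer power of the other; $\mathcal{P}^*(G)$ is its subgraph induced on $G\setminus\{1\}$. $N[x]$ is the closed neighbourhood of $x$ in $\mathcal{P}(G)$, and $x\mathtt{N}y$ iff $N[x]=N[y]$. $\mathcal{P}^*(G)/\mathtt{N}$ is the quotient graph whose vertices are the $\mathtt{N}$-classes of elements of $G\setminus\{1\}$, two distinct classes being adjacent iff some element of one is adjacent in $\mathcal{P}^*(G)$ to some element of the other. A path is a sequence of distinct vertices with consecutive ones adjacent; a cycle is a cyclic such sequence of $k\ge3$ distinct vertices, with length $\ell$ its number of edges. The $\mathtt{N}$-weight of a path $\mathcal{W}$ in $\mathcal{P}^*(G)/\mathtt{N}$ is $w_{\mathtt{N}}(\mathcal{W})=\sum_{c\in V_{\mathcal{W}}}|c|$, and $w_G$ is the maximum $\mathtt{N}$-weight of a path in $\mathcal{P}^*(G)/\mathtt{N}$. *)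

(* Defs.v *)
From mathcomp Require Import all_boot all_fingroup.
From mathcomp Require Import boolp.
Set Implicit Arguments. Unset Strict Implicit. Unset Printing Implicit Defensive.
Local Open Scope group_scope.

Section PowerGraph.
Variable gT : finGroupType.

Definition is_pow (x y : gT) : Prop := exists n : nat, (0 < n)%N /\ y = x ^+ n.

(* adjacency in the power graph P(G), G = the whole group gT *)
Definition padj (x y : gT) : bool := (x != y) && `[< is_pow x y \/ is_pow y x >].

Definition cnbhd (x : gT) : {set gT} := [set y | (y == x) || padj x y].

Definition Nclass (x : gT) : {set gT} := [set y | (y != 1) && (cnbhd y == cnbhd x)].

Definition qvert (c : {set gT}) : bool := [exists x, (x != 1) && (c == Nclass x)].

Definition qadj (c d : {set gT}) : bool :=
  (c != d) && [exists x in c, exists y in d, padj x y].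

Definition qpath (s : seq {set gT}) : bool :=
  [&& (0 < size s)%N, all qvert s, uniq s & sorted qadj s].

Definition Nweight (s : seq {set gT}) : nat := \sum_(c <- s) #|c|.

(* w_G : maximum N-weight of a path (paths have at most #|{set gT}| vertices) *)
Definition wG : nat :=
  \max_(n < #|{set gT}|.+1) \max_(t : n.-tuple {set gT} | qpath t) Nweight t.

(* a cycle of P(G): k >= 3 distinct vertices, cyclically consecutive adjacent;
   its length (number of edges) is size s *)
Definition pcycle (s : seq gT) : bool := [&& (2 < size s)%N, uniq s & path.cycle padj s].

Definition max_pcycle (s : seq gT) : Prop :=
  pcycle s /\ forall s' : seq gT, pcycle s' -> (size s' <= size s)%N.

End PowerGraph.

(* Main.v *)
Require Import Defs.
From mathcomp Require Import all_boot all_fingroup.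
From mathcomp Require Import boolp zify.
Set Implicit Arguments. Unset Strict Implicit. Unset Printing Implicit Defensive.

Section Aux.
Variable gT : finGroupType.
Local Open Scope group_scope.
Implicit Types (x y u v : gT) (A B c d : {set gT}).

Definition fadj A B : bool :=
  [forall u, forall v, (u \in A) ==> (v \in B) ==> padj u v].

Lemma fadjP A B : reflect (forall u v, u \in A -> v \in B -> padj u v) (fadj A B).
Proof.
apply: (iffP forallP) => H.
  move=> u v uA vB; have /forallP/(_ v) := H u; by rewrite uA vB.
move=> u; apply/forallP => v; apply/implyP => uA; apply/implyP => vB; exact: H.
Qed.

Definition clique A := forall u v, u \in A -> v \in A -> u != v -> padj u v.

Lemma padjC x y : padj x y = padj y x.
Proof.
rewrite /padj eq_sym; congr (_ && _); apply/asboolP/asboolP; tauto.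
Qed.

Lemma padj1 x : x != 1 -> padj 1 x.
Proof.
move=> x1; rewrite /padj eq_sym x1 /=; apply/asboolP; right.
by exists #[x]; split; [exact: order_gt0 | rewrite expg_order].
Qed.

Lemma qvertE c : qvert c -> exists2 x, x != 1 & c = Nclass x.
Proof. by case/existsP => x /andP [x1 /eqP ->]; exists x. Qed.

Lemma class_elt c u : qvert c -> u \in c -> u != 1 /\ c = Nclass u.
Proof.
case/qvertE => x x1 ->; rewrite inE => /andP [u1 /eqP e]; split => //.
by apply/setP => z; rewrite !inE e.
Qed.

Lemma class_cnbhd c u v : qvert c -> u \in c -> v \in c -> cnbhd u = cnbhd v.
Proof.
move=> qc uc vc; have [_ e] := class_elt qc uc.
by move: vc; rewrite e inE => /andP [_ /eqP ->].
Qed.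

Lemma class_clique c : qvert c -> clique c.
Proof.
move=> qc u v uc vc uv; have e := class_cnbhd qc uc vc.
have : v \in cnbhd v by rewrite inE eqxx.
by rewrite -e inE eq_sym (negbTE uv).
Qed.

Lemma class_disj c d u : qvert c -> qvert d -> u \in c -> u \in d -> c = d.
Proof.
move=> qc qd uc ud.
by have [_ ->] := class_elt qc uc; have [_ ->] := class_elt qd ud.
Qed.

Lemma class_no1 c : qvert c -> 1 \notin c.
Proof. by move=> qc; apply/negP => /(class_elt qc) []; rewrite eqxx. Qed.

Lemma class_nonempty c : qvert c -> c != set0.
Proof.
case/qvertE => x x1 ->; apply/set0Pn; exists x; by rewrite inE x1 eqxx.
Qed.

Lemma class_disjoint c d : qvert c -> qvert d -> c != d -> [disjoint c & d].
Proof.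
move=> qc qd cd; rewrite -setI_eq0; apply/eqP/setP => z; rewrite !inE.
apply/negP => /andP [zc zd]; by rewrite (class_disj qc qd zc zd) eqxx in cd.
Qed.

Lemma qadj_fadj c d : qvert c -> qvert d -> qadj c d -> fadj c d.
Proof.
move=> qc qd /andP [cd /existsP [x /andP [xc /existsP [y /andP [yd pxy]]]]].
apply/fadjP => u v uc vd.
have nd : forall z, z \in c -> z \in d -> False.
  move=> z zc zd; by rewrite (class_disj qc qd zc zd) eqxx in cd.
have puy : padj u y.
  have : y \in cnbhd x by rewrite inE pxy orbT.
  rewrite (class_cnbhd qc xc uc) inE => /orP [/eqP yu|] //.
  by exfalso; apply: (nd y) => //; rewrite yu.
have : u \in cnbhd y by rewrite inE padjC puy orbT.
rewrite (class_cnbhd qd yd vd) inE => /orP [/eqP uv|]; last by rewrite padjC.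
by exfalso; apply: (nd u) => //; rewrite uv.
Qed.

Lemma qadjC c d : qadj c d = qadj d c.
Proof.
rewrite /qadj eq_sym; congr (_ && _).
apply/idP/idP => /existsP [x /andP [xc /existsP [y /andP [yd p]]]];
  apply/existsP; exists y; rewrite yd /=; apply/existsP; exists x;
  by rewrite xc padjC.
Qed.

Lemma fadj_sub A B A' B' : A' \subset A -> B' \subset B -> fadj A B -> fadj A' B'.
Proof.
move=> sA sB /fadjP H; apply/fadjP => u v uA vB; apply: H;
  [exact: (subsetP sA) | exact: (subsetP sB)].
Qed.

Lemma fadj1l c : qvert c -> fadj [set 1] c.
Proof.
move=> qc; apply/fadjP => u v; rewrite inE => /eqP -> vc; apply: padj1.
apply: (contraNneq _ (class_no1 qc)) => v1; by rewrite -v1.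
Qed.

Lemma fadj1r c : qvert c -> fadj c [set 1].
Proof.
move=> qc; apply/fadjP => u v uc; rewrite inE => /eqP ->; rewrite padjC.
apply: padj1; apply: (contraNneq _ (class_no1 qc)) => v1; by rewrite -v1.
Qed.

Lemma path_sub S P (X Y : {set gT}) : X \subset Y -> all2 (fun A B => A \subset B) S P ->
  path fadj Y P -> path fadj X S.
Proof.
elim: S P X Y => [|A S IH] [|B P] X Y //= sXY /andP [sAB sSP] /andP [fYB pBP].
apply/andP; split; [exact: fadj_sub sXY sAB fYB | exact: IH sAB sSP pBP].
Qed.

Lemma sorted_clique (s : seq gT) : uniq s ->
  (forall u v, u \in s -> v \in s -> u != v -> padj u v) -> sorted (@padj gT) s.
Proof.
elim: s => [|u s IH] //=; case: s IH => [|v s] IH //= /andP [nu us] H.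
apply/andP; split.
  apply: H; rewrite ?inE ?eqxx ?orbT //.
  by apply: contraNneq nu => ->; rewrite inE eqxx.
apply: IH => // a b ia ib; apply: H; by rewrite inE ?ia ?ib orbT.
Qed.

Definition fl (S : seq {set gT}) := flatten (map (fun A => enum A) S).

Lemma path_blocks S (X : {set gT}) x : x \in X -> (forall A, A \in S -> A != set0 /\ clique A) ->
  path fadj X S -> path (@padj gT) x (fl S).
Proof.
rewrite /fl; elim: S X x => [|A S IH] X x //= xX HS /andP [fXA pAS].
rewrite cat_path; have [A0 cA] := HS A (mem_head _ _).
have sA : sorted (@padj gT) (enum A).
  apply: sorted_clique; [exact: enum_uniq | move=> a b; rewrite !mem_enum; exact: cA].
case eA: (enum A) sA => [|u r] sA.
  by move/set0Pn: A0 => [z zA]; rewrite -mem_enum eA in zA.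
apply/andP; split.
  move: sA => /= ->; rewrite andbT.
  by move/fadjP: fXA; apply => //; rewrite -mem_enum eA mem_head.
apply: (IH A) => //.
  by rewrite -mem_enum eA /= mem_last.
by move=> B BS; apply: HS; rewrite inE BS orbT.
Qed.

Lemma fl_mem S x : (x \in fl S) = has (fun A => x \in A) S.
Proof.
apply/flatten_mapP/hasP => [[A AS]|[A AS xA]]; rewrite ?mem_enum.
  by exists A.
by exists A; rewrite ?mem_enum.
Qed.

Lemma fl_size S : size (fl S) = \sum_(A <- S) #|A|.
Proof.
rewrite /fl; elim: S => [|A S IH]; rewrite ?big_nil ?big_cons //=.
by rewrite size_cat IH cardE.
Qed.

Lemma fl_uniq S : pairwise (fun A B => [disjoint A & B]) S -> uniq (fl S).
Proof.
elim: S => [|A S IH] //; rewrite pairwise_cons => /andP [dA pS].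
rewrite /fl /= cat_uniq enum_uniq -/(fl S) IH // andbT /=.
apply/hasPn => z; rewrite fl_mem => /hasP [B BS zB]; rewrite mem_enum.
by rewrite (disjointFl (allP dA B BS) zB).
Qed.

Lemma pairwise_of_uniq (r : rel {set gT}) s : uniq s ->
  (forall A B, A \in s -> B \in s -> A != B -> r A B) -> pairwise r s.
Proof.
elim: s => [|A s IH] //= /andP [nA us] H; apply/andP; split.
  apply/allP => B Bs; apply: H; rewrite ?inE ?eqxx ?Bs ?orbT //.
  by apply: contraNneq nA => ->.
apply: IH => // a b ia ib; apply: H; by rewrite inE ?ia ?ib orbT.
Qed.

Lemma cycle_blocks S : (forall A, A \in S -> A != set0 /\ clique A) ->
  path fadj [set 1] (rcons S [set 1]) -> path.cycle (@padj gT) (1 :: fl S).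
Proof.
move=> HS pS /=.
have -> : rcons (fl S) 1 = fl (rcons S [set 1]).
  by rewrite /fl -cats1 -(cats1 S) map_cat flatten_cat /= enum_set1 cats0.
apply: (path_blocks (X := [set 1])) => //; rewrite ?set11 //.
move=> A; rewrite mem_rcons inE => /orP [/eqP -> | AS]; last exact: HS.
split; first by apply/set0Pn; exists 1; rewrite inE.
rewrite /clique.
by move=> u v; rewrite !inE => /eqP -> /eqP ->; rewrite eqxx.

Qed.

Lemma path_classes P : P != [::] -> all (@qvert gT) P -> sorted (@qadj gT) P ->
  path fadj [set 1] (rcons P [set 1]).
Proof.
case: P => [|c P] // _ allq sP; move: (allq) => /= /andP [qc qP].
rewrite fadj1l //= rcons_path; apply/andP; split.
  apply: (sub_in_path (P := @qvert gT) _ allq sP).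
  by move=> a b qa qb; exact: qadj_fadj.
apply: fadj1r; exact: (allP allq) _ (mem_last c P).
Qed.

Lemma clique_sub A B : A \subset B -> clique B -> clique A.
Proof. by move=> sAB cB u v uA vA; apply: cB; apply: (subsetP sAB). Qed.

Lemma classes_ok W : all (@qvert gT) W -> forall A, A \in W -> A != set0 /\ clique A.
Proof.
move=> Wv A AW; have qA := allP Wv A AW.
split; [exact: class_nonempty | exact: class_clique].
Qed.

Lemma path_cycle W : qpath W ->
  uniq (1 :: fl W) /\ path.cycle (@padj gT) (1 :: fl W).
Proof.
case/and4P => W0 Wv Wu Ws; split.
  have -> : 1 :: fl W = fl ([set 1] :: W) by rewrite /fl /= enum_set1.
  apply: fl_uniq; rewrite pairwise_cons; apply/andP; split.
    apply/allP => B BW; rewrite disjoints1; exact: class_no1 (allP Wv B BW).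
  apply: pairwise_of_uniq => // A B AW BW; apply: class_disjoint;
    [exact: (allP Wv) | exact: (allP Wv)].
apply: cycle_blocks; first exact: classes_ok.
apply: path_classes => //; by case: W W0 {Wv Wu Ws}.
Qed.

Lemma part1 (C : seq gT) (W : seq {set gT}) : max_pcycle C -> qpath W -> (Nweight W < size C)%N.
Proof.
move=> [pC Cmax] qW.
have sizeL : size (1 :: fl W) = (Nweight W).+1 by rewrite /= fl_size.
case/and3P: (pC) => s2 _ _.
case: (leqP (Nweight W) 1%N) => [le1 | gt1]; first by lia.
have [uL cL] := path_cycle qW.
have pL : pcycle (1 :: fl W) by apply/and3P; split => //; rewrite sizeL; lia.
by have := Cmax _ pL; rewrite sizeL.
Qed.

Lemma all2_sub_cat (s1 s2 t1 t2 : seq {set gT}) :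
  all2 (fun A B => A \subset B) s1 t1 -> all2 (fun A B => A \subset B) s2 t2 ->
  all2 (fun A B => A \subset B) (s1 ++ s2) (t1 ++ t2).
Proof.
elim: s1 t1 => [|A s1 IH] [|B t1] //= /andP [sAB h1] h2.
by rewrite sAB IH.
Qed.

Lemma all2_sub_refl (s : seq {set gT}) : all2 (fun A B => A \subset B) s s.
Proof. by elim: s => [|A s IH] //=; rewrite subxx IH. Qed.

Lemma arith6 (x1 x2 x3 x4 x5 x6 : nat) :
  x1 + (x2 + (x3 + 0 + (x4 + (x5 + x6)))) = x4 + (x1 + (x2 + ((x3 + x5) + x6))).
Proof. lia. Qed.

Lemma part2 (C : seq gT) (W : seq {set gT}) i (y : {set gT}) :
  max_pcycle C -> size C = (Nweight W).+1 -> qpath W ->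
  (0 < i < (size W).-1)%N -> (2 <= #|nth set0 W i|)%N -> qvert y -> y \notin W ->
  qadj y (nth set0 W i) -> (2 <= #|y|)%N -> False.
Proof.
move=> [pC Cmax] sC qW /andP [i0 iW'] c2 qy yW yc y2.
have iW : (i < size W)%N by move: iW'; case: (size W) => // n /= /ltnW.
have [uL cL] := path_cycle qW.
have qW' := qW; case/and4P: qW' => W0 Wv Wu Ws.
set c := nth set0 W i in c2 yc.
have qc : qvert c := allP Wv c (mem_nth set0 iW).
have [W1 [W2 [eW sW1]]] : exists W1 W2, W = W1 ++ c :: W2 /\ size W1 = i.
  by exists (take i W), (drop i.+1 W); rewrite -drop_nth // cat_take_drop size_take iW.
clearbody c; subst W.
case/card_gt1P: c2 => a [b [aC bC ab]].
have bC' : b \in c :\ a by rewrite in_setD1 eq_sym ab bC.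
have WvE := Wv; rewrite all_cat /= in WvE; case/and3P: WvE => qW1 _ qW2.
pose S' := W1 ++ [:: [set a]; y; c :\ a] ++ W2.
pose P' := W1 ++ [:: c; y; c] ++ W2.
have HS : forall A, A \in S' -> A != set0 /\ clique A.
  move=> A; rewrite mem_cat => /orP [AW1|].
    by apply: (classes_ok Wv); rewrite mem_cat AW1.
  rewrite mem_cat => /orP [|AW2].
    rewrite !inE => /or3P [/eqP->|/eqP->|/eqP->].
    - split; first by apply/set0Pn; exists a; rewrite inE.
      by move=> u v; rewrite !inE => /eqP -> /eqP ->; rewrite eqxx.
    - split; [exact: class_nonempty | exact: class_clique].
    - split; first by apply/set0Pn; exists b.
      exact: clique_sub (subD1set c a) (class_clique qc).
  by apply: (classes_ok Wv); rewrite mem_cat inE AW2 !orbT.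
have Pq : path fadj [set 1] (rcons P' [set 1]).
  apply: path_classes; first by rewrite /P'; case: (W1).
    by rewrite all_cat qW1 /= qc qy qW2.
  case eW1: W1 sW1 => [|w W1'] sW1; first by rewrite -sW1 in i0.
  move: Ws; rewrite eW1 /= !cat_path /= => /and3P [p1 q1 p2].
  have cy : qadj c y by rewrite qadjC.
  by rewrite /P' eW1 /= cat_path /= p1 q1 p2 yc cy.
have cyc : path.cycle (@padj gT) (1 :: fl S').
  apply: cycle_blocks HS (path_sub (subxx _) _ Pq).
  rewrite -!cats1 /S' /P' -!catA; apply: all2_sub_cat; first exact: all2_sub_refl.
  apply: all2_sub_cat; last exact: all2_sub_refl.
  by rewrite /= sub1set aC subxx subD1set.
have pc : perm_eq (enum c) (a :: enum (c :\ a)).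
  apply: uniq_perm; first exact: enum_uniq.
    by rewrite /= mem_enum in_setD1 eqxx enum_uniq.
  by move=> x; rewrite inE !mem_enum in_setD1; case: (x =P a) => [->|].
have pL : perm_eq (1 :: fl S') (enum y ++ 1 :: fl (W1 ++ c :: W2)).
  apply/seq.permP => p.
  rewrite /fl /S' /= !map_cat !flatten_cat /= !count_cat /= enum_set1 /= !count_cat.
  rewrite ((seq.permP pc) p) /=.
  exact: arith6.
have uL' : uniq (1 :: fl S').
  rewrite (perm_uniq pL) cat_uniq enum_uniq uL andbT.
  apply/hasPn => z; rewrite inE fl_mem mem_enum => /orP [/eqP -> | /hasP [B BW zB]].
    exact: class_no1 qy.
  apply/negP => zy; have eyB := class_disj qy (allP Wv B BW) zy zB.
  by rewrite eyB BW in yW.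
have sL' : size (1 :: fl S') = (#|y| + (Nweight (W1 ++ c :: W2)).+1)%N.
  by rewrite (perm_size pL) size_cat -cardE /= fl_size.
have pcL : pcycle (1 :: fl S').
  apply/and3P; split => //; rewrite sL' addnS ltnS.
  exact: leq_trans y2 (leq_addr _ _).
have := Cmax _ pcL; rewrite sL' sC -[X in (_ <= X)%N]add0n leq_add2r leqn0.
by move=> /eqP y0; rewrite y0 in y2.
Qed.

End Aux.

Theorem mainTheorem5 (gT : finGroupType) (C : seq gT) :
  max_pcycle C ->
  (wG gT).+1 <= size C /\
  (size C = (wG gT).+1 ->
   forall W : seq {set gT}, qpath W -> Nweight W = wG gT ->
   forall i : nat, 0 < i < (size W).-1 -> 2 <= #|nth set0 W i| ->
   ~ (exists y : {set gT},
        [/\ qvert y, y \notin W,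
            y = nth set0 W i \/ qadj y (nth set0 W i) & 2 <= #|y|])).
Proof.
move=> mC; split.
  have : wG gT <= (size C).-1.
    apply/bigmax_leqP => n _; apply/bigmax_leqP => t qt.
    have := part1 mC qt; lia.
  case/and3P: mC.1 => s2 _ _; lia.
move=> sC W qW eW i hi c2 [y [qy yW [yc|yc] y2]].
  case/andP: hi => _ hi.
  have iW : i < size W by move: hi; case: (size W) => //= n hn; apply: ltnW.
  by rewrite yc mem_nth in yW.
by apply: (part2 mC _ qW hi c2 qy yW yc y2); rewrite eW.
Qed.
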